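(* $$\sum_{n=1}^\infty(M_e(\mathcal{D},n)-M_o(\mathcal{D},n))q^n=\frac{1}{1+q}\sum_{n=1}^\infty q^{n(3n+1)/2}(1-q^{2n+1})-q(q^2;q)_{\infty}.$$
   Context: $(z;q)_\infty=\prod_{j\ge0}(1-zq^j)$. $M_e(\mathcal{D},n)$ (resp. $M_o(\mathcal{D},n)$) is the number of partitions of $n$ into distinct parts with even (resp. odd) crank, where for a partition into distinct parts the crank is its largest part if $1$ is not a part, and is (number of parts) $-2$ if $1$ is a part. *)

(* Defs.v *)
From mathcomp Require Import all_boot all_order all_algebra ssrint.
Set Implicit Arguments. Unset Strict Implicit. Unset Printing Implicit Defensive.
Import Order.TTheory GRing.Theory Num.Theory.
Local Open Scope ring_scope.

(* A partition of n into distinct parts is identified with its set of parts,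
   a subset A of {0,...,n} not containing 0 whose elements sum to n. *)
Definition distinct_partition (n : nat) (A : {set 'I_n.+1}) : bool :=
  (ord0 \notin A) && ((\sum_(i in A) (i : nat))%N == n).

Definition dcrank (n : nat) (A : {set 'I_n.+1}) : int :=
  if [exists i in A, (i : nat) == 1%N]
  then (#|A|%:Z - 2)%R
  else (\max_(i in A) (i : nat))%:Z.

Definition crank_even (c : int) : bool := ~~ odd `|c|%N.

Definition Me (n : nat) : nat :=
  #|[set A : {set 'I_n.+1} | distinct_partition A && crank_even (dcrank A)]|.
Definition Mo (n : nat) : nat :=
  #|[set A : {set 'I_n.+1} | distinct_partition A && ~~ crank_even (dcrank A)]|.

(* Coefficient of q^n on the left-hand side (the sum starts at n = 1). *)
Definition lhs_coef (n : nat) : int :=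
  if n == 0%N then 0%R else ((Me n)%:Z - (Mo n)%:Z)%R.

Local Open Scope ring_scope.

(* Truncation (valid modulo q^(N+1)) of the right-hand side
   1/(1+q) * sum_{n>=1} q^{n(3n+1)/2}(1-q^{2n+1}) - q (q^2;q)_oo,
   with 1/(1+q) = sum_k (-1)^k q^k and (q^2;q)_oo = prod_{j>=0} (1 - q^{j+2}). *)
Definition rhs_trunc (N : nat) : {poly int} :=
  (\sum_(k < N.+1) (-1) ^+ k *: 'X^k)
  * (\sum_(1 <= m < N.+1) 'X^((m * (3 * m + 1)) %/ 2) * (1 - 'X^(2 * m + 1)))
  - 'X * \prod_(j < N.+1) (1 - 'X^(j + 2)).

(* Main.v *)
Require Import Defs.
From mathcomp Require Import all_boot all_order all_algebra ssrint.
From mathcomp Require Import zify ring.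
Import GRing.Theory.
Set Implicit Arguments. Unset Strict Implicit. Unset Printing Implicit Defensive.

Fixpoint run (l : seq nat) : nat :=
  match l with
  | [::] => 0
  | x :: t => match t with [::] => 1 | y :: _ => if x == y.+1 then (run t).+1 else 1 end
  end.

Definition incr_top t (l : seq nat) := map succn (take t l) ++ drop t l.
Definition decr_top t (l : seq nat) := map predn (take t l) ++ drop t l.
Definition ispos (x : nat) := 0 < x.
Definition decs (l : seq nat) := sorted gtn l && all ispos l.

Definition frank (l : seq nat) : seq nat :=
  if l is [::] then [::] else
  if (last 0 l <= run l) && (last 0 l < size l) then incr_top (last 0 l) (take (size l).-1 l)
  else if run l + (run l == size l) < last 0 l then rcons (decr_top (run l) l) (run l)
  else l.

Fixpoint dseq a k := if k is k'.+1 then (a + k') :: dseq a k' else [::].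

Lemma run1 x : run [:: x] = 1. Proof. by []. Qed.
Lemma run2 x y l : run [:: x, y & l] = if x == y.+1 then (run (y :: l)).+1 else 1.
Proof. by []. Qed.
Arguments run : simpl never.
Lemma incr0 l : incr_top 0 l = l. Proof. by rewrite /incr_top take0 drop0. Qed.
Lemma incrS t x l : incr_top t.+1 (x :: l) = x.+1 :: incr_top t l. Proof. by []. Qed.
Lemma incr_nil t : incr_top t [::] = [::]. Proof. by rewrite /incr_top; case: t. Qed.
Lemma decr0 l : decr_top 0 l = l. Proof. by rewrite /decr_top take0 drop0. Qed.
Lemma decrS t x l : decr_top t.+1 (x :: l) = x.-1 :: decr_top t l. Proof. by []. Qed.
Lemma decr_nil t : decr_top t [::] = [::]. Proof. by rewrite /decr_top; case: t. Qed.
Arguments incr_top : simpl never.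
Arguments decr_top : simpl never.

Lemma run_gt0 x l : 0 < run (x :: l).
Proof. by case: l => [|y l]; rewrite ?run1 ?run2 //; case: ifP. Qed.

Lemma run_le_size l : run l <= size l.
Proof.
elim: l => // x [|y l] IH; rewrite ?run1 ?run2 //; case: ifP => //.
Qed.

Lemma run0 : run [::] = 0. Proof. by []. Qed.

Lemma incr_run l t : sorted gtn l -> 0 < t <= run l -> run (incr_top t l) = t.
Proof.
elim: l t => [|x [|y l] IH] t.
- by rewrite run0; lia.
- by rewrite run1; case: t => [|[|t]] //= _ _; rewrite incrS incr0 run1.
move=> /= /andP[xy Hs]; case: t => [|[|t]] //.
- by move=> _; rewrite incrS incr0 run2 eqSS (gtn_eqF xy).
rewrite run2; case: ifP => // /eqP Exy Ht.
rewrite !incrS run2 -incrS IH //.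
by rewrite Exy eqxx.
Qed.

Lemma run_take l m : run (take m l) = minn m (run l).
Proof.
elim: l m => [|x [|y l] IH] [|m] //; rewrite ?take0 ?run0 ?minn0 ?min0n //.
case: m => [|m]; first by rewrite /= run1; have := run_gt0 x (y :: l); lia.
rewrite /= run2 run2 -/(take m.+1 (y :: l)).
have := IH m.+1; rewrite /= => ->.
case: ifP => _; lia.
Qed.

Lemma run_cat l1 l2 : run l1 <= run (l1 ++ l2).
Proof.
elim: l1 => [|x [|y l] IH]; first by rewrite run0.
- by rewrite run1 run_gt0.
rewrite /= !run2; case: ifP => // _; exact: IH.
Qed.

Lemma decr_run l t : all ispos l -> t <= run l -> t <= run (decr_top t l).
Proof.
elim: l t => [|x [|y l] IH] [|[|t]] //; rewrite ?run0 ?run1 ?decrS ?decr0 ?run_gt0 //.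
rewrite run2; case: ifP => // /eqP Exy /= /andP[px /andP[py Hl]] Ht.
rewrite run2 Exy /= (prednK (py : 0 < y)) eqxx ltnS.
have := IH t.+1; rewrite decrS; apply => //=; by rewrite py.
Qed.

Lemma pos_last x l : path gtn x l -> all ispos (x :: l) = (0 < last x l).
Proof.
elim: l x => [|y l IH] x /=; first by rewrite andbT.
move=> /andP[xy H]; rewrite -IH //= /ispos.
have -> : 0 < x by lia.
by [].
Qed.

Lemma size_incr l t : size (incr_top t l) = size l.
Proof. by rewrite /incr_top size_cat size_map -size_cat cat_take_drop. Qed.
Lemma size_decr l t : size (decr_top t l) = size l.
Proof. by rewrite /decr_top size_cat size_map -size_cat cat_take_drop. Qed.

Lemma lastNE (a b : nat) s : s != [::] -> last a s = last b s.
Proof. by case: s. Qed.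

Lemma last_incr l t : 0 < size l -> t <= size l ->
  last 0 (incr_top t l) = last 0 l + (t == size l).
Proof.
elim: l t => [|x l IH] [|t] //; rewrite ?incr0.
  by move=> _ _; rewrite addn0.
rewrite incrS; case: l IH => [|y l] IH.
  by case: t => //= _ _; rewrite addn1.
move=> _ Ht /=.
rewrite (@lastNE _ 0); last by rewrite -size_eq0 size_incr.
by rewrite IH.
Qed.

Lemma last_decr l t : 0 < size l -> t <= size l ->
  last 0 (decr_top t l) = last 0 l - (t == size l).
Proof.
elim: l t => [|x l IH] [|t] //; rewrite ?decr0.
  by move=> _ _; rewrite subn0.
rewrite decrS; case: l IH => [|y l] IH.
  by case: t => //= _ _; rewrite subn1.
move=> _ Ht /=.
rewrite (@lastNE _ 0); last by rewrite -size_eq0 size_decr.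
by rewrite IH.
Qed.

Lemma sumn_incr l t : t <= size l -> sumn (incr_top t l) = sumn l + t.
Proof.
elim: l t => [|x l IH] [|t] //; rewrite ?incr0 ?addn0 // incrS /= => Ht.
rewrite IH //; lia.
Qed.

Lemma sumn_decr l t : t <= size l -> all ispos l -> sumn (decr_top t l) + t = sumn l.
Proof.
elim: l t => [|x l IH] [|t] //; rewrite ?decr0 ?addn0 // decrS /= => Ht /andP[px Hl].
have := IH t Ht Hl; rewrite /ispos in px; lia.
Qed.

Lemma path_incr l t x0 : path gtn x0 l -> path gtn x0.+1 (incr_top t l).
Proof.
elim: l t x0 => [|x l IH] [|t] x0 //; rewrite ?incr0 ?incr_nil //.
  by rewrite /= => /andP[H1 H2]; rewrite H2 andbT; lia.
rewrite incrS /= => /andP[H1 H2]; rewrite IH // andbT; lia.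
Qed.

Lemma sorted_incr l t : sorted gtn l -> sorted gtn (incr_top t l).
Proof.
case: l t => [|x l] [|t]; rewrite ?incr0 ?incr_nil // incrS /=; exact: path_incr.
Qed.

Lemma all_incr l t : all ispos l -> all ispos (incr_top t l).
Proof.
elim: l t => [|x l IH] [|t]; rewrite ?incr0 ?incr_nil // incrS /= => /andP[_ H].
by rewrite IH.
Qed.

Lemma sorted_decr l : sorted gtn l -> all ispos l -> sorted gtn (decr_top (run l) l).
Proof.
elim: l => [|x [|y l] IH] //.
rewrite run2 /= => /andP[xy Hs] /andP[px /andP[py Hl]].
case: ifP => [/eqP Exy | /eqP Nxy].
  have := IH Hs; rewrite /= py Hl => /(_ isT).
  case E: (run (y :: l)) (run_gt0 y l) => [|r] // _.
  rewrite !decrS /= => ->.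
  by rewrite andbT /ispos in py *; lia.
rewrite decrS decr0 /= Hs andbT; lia.
Qed.

Lemma decr_incr l t : decr_top t (incr_top t l) = l.
Proof.
elim: l t => [|x l IH] [|t]; rewrite ?incr0 ?decr0 ?incr_nil ?decr_nil //.
by rewrite incrS decrS IH.
Qed.

Lemma incr_decr l t : all ispos l -> incr_top t (decr_top t l) = l.
Proof.
elim: l t => [|x l IH] [|t]; rewrite ?incr0 ?decr0 ?incr_nil ?decr_nil //.
rewrite decrS incrS /= => /andP[px H]; rewrite IH //.
by rewrite prednK.
Qed.

Lemma belast_take (x : nat) l : belast x l = take (size l) (x :: l).
Proof. by elim: l x => [|y l IH] x //=; rewrite IH. Qed.

Lemma frank_ne l : l != [::] -> frank l =
  if (last 0 l <= run l) && (last 0 l < size l) then incr_top (last 0 l) (take (size l).-1 l)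
  else if run l + (run l == size l) < last 0 l then rcons (decr_top (run l) l) (run l)
  else l.
Proof. by case: l. Qed.
Arguments frank : simpl never.

Lemma sorted_rcons_gt b s : b != [::] -> sorted gtn (rcons b s) = sorted gtn b && (s < last 0 b).
Proof. by case: b => // x b _; rewrite rcons_cons /= rcons_path. Qed.

Lemma take_rcons_size (b : seq nat) s : take (size b) (rcons b s) = b.
Proof. by rewrite -cats1 take_size_cat. Qed.

Lemma sumn_rcons' b s : sumn (rcons b s) = sumn b + s.
Proof. by rewrite -cats1 sumn_cat /= addn0. Qed.

Lemma run_gt0' l : l != [::] -> 0 < run l.
Proof. by case: l => // x l _; exact: run_gt0. Qed.

Lemma dec_last l : sorted gtn l -> l != [::] -> all ispos l = (0 < last 0 l).
Proof. by case: l => // x l /= H _; rewrite -pos_last. Qed.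

Lemma move1 b s : decs (rcons b s) -> s <= run (rcons b s) -> s < (size b).+1 ->
  [/\ decs (incr_top s b), sumn (incr_top s b) = sumn (rcons b s),
      odd (head 0 (incr_top s b)) = ~~ odd (head 0 (rcons b s)) &
      frank (incr_top s b) = rcons b s].
Proof.
move=> /andP[Hs Hp] Hsr Hsk.
rewrite all_rcons in Hp; case/andP: Hp => ps Hpb.
have s0 : 0 < s by [].
have bne : b != [::] by case: b Hsk {Hsr Hs Hpb} => // /= Hsk; lia.
move: Hs; rewrite sorted_rcons_gt // => /andP[Hsb Hlb].
have Hrb : s <= run b.
  by rewrite -(take_rcons_size b s) run_take; lia.
split.
- by rewrite /decs sorted_incr // all_incr.
- by rewrite sumn_incr ?sumn_rcons' //; lia.
- case: b bne {Hsb Hlb Hrb Hpb Hsk} Hsr => // x b _ _.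
  by case: s s0 {ps} => // s _; rewrite incrS /= .
have Hm : incr_top s b != [::] by rewrite -size_eq0 size_incr size_eq0.
rewrite frank_ne // incr_run //; last by rewrite s0.
rewrite last_incr ?size_incr //; last by lia.
  have -> : (last 0 b + (s == size b) <= s) = false by lia.
  rewrite /= ltn_add2r Hlb decr_incr //.
Qed.

Lemma move2 l : decs l -> l != [::] -> ~~ ((last 0 l <= run l) && (last 0 l < size l)) ->
  run l + (run l == size l) < last 0 l ->
  [/\ decs (rcons (decr_top (run l) l) (run l)),
      sumn (rcons (decr_top (run l) l) (run l)) = sumn l,
      odd (head 0 (rcons (decr_top (run l) l) (run l))) = ~~ odd (head 0 l) &
      frank (rcons (decr_top (run l) l) (run l)) = l].
Proof.
move=> /andP[Hs Hp] lne H1 H2.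
have r0 : 0 < run l := run_gt0' lne.
have rk : run l <= size l := run_le_size l.
have l0 : 0 < size l by rewrite lt0n size_eq0.
have HD : sorted gtn (decr_top (run l) l) := sorted_decr Hs Hp.
have Dne : decr_top (run l) l != [::] by rewrite -size_eq0 size_decr size_eq0.
have HlD : last 0 (decr_top (run l) l) = last 0 l - (run l == size l) := last_decr l0 rk.
have Hms : sorted gtn (rcons (decr_top (run l) l) (run l)).
  by rewrite sorted_rcons_gt // HD HlD /=; move: H2; case: (run l == size l) => /=; lia.
have mne : rcons (decr_top (run l) l) (run l) != [::] by rewrite -size_eq0 size_rcons.
split.
- by rewrite /decs Hms dec_last // last_rcons.
- by rewrite sumn_rcons' sumn_decr.
- case: l lne {Hs H1 H2 rk l0 HD Dne HlD Hms mne} Hp r0 => // x l _ /= /andP[px _].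
  case: (run (x :: l)) => // r _; rewrite decrS rcons_cons /=.
  by case: x px => // x _; rewrite /= negbK.
rewrite frank_ne // last_rcons size_rcons size_decr.
have -> : run l <= run (rcons (decr_top (run l) l) (run l)).
  by rewrite -cats1 (leq_trans (decr_run Hp (leqnn _))) // run_cat.
rewrite ltnS rk /= -(size_decr l (run l)) take_rcons_size incr_decr //.
Qed.

Lemma frank_invol l : decs l -> frank l != l ->
  [/\ decs (frank l), sumn (frank l) = sumn l,
      odd (head 0 (frank l)) = ~~ odd (head 0 l) & frank (frank l) = l].
Proof.
case/lastP: l => [|b s]; first by rewrite /frank.
have ne : rcons b s != [::] by rewrite -size_eq0 size_rcons.
move=> Hd.
have F := frank_ne ne; rewrite last_rcons size_rcons /= take_rcons_size in F.
rewrite F.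
case: ifP => [/andP[T1 T2] _ | T1]; first exact: move1.
case: ifP => [T2 _ | _]; last by rewrite eqxx.
by apply: move2 => //; rewrite last_rcons size_rcons ?T1.
Qed.

Lemma run_full l : run l = size l -> l = dseq (last 0 l) (size l).
Proof.
elim: l => [|x [|y l] IH] //; first by rewrite /= addn0.
rewrite run2; case: ifP => [/eqP Exy [] /IH E | _ //].
move: E; rewrite /= => -[Ey El].
by rewrite /= addnS -Ey -El Exy.
Qed.

Lemma frank_fix l : decs l -> frank l = l ->
  l = [::] \/ exists2 k, 0 < k & (l = dseq k k \/ l = dseq k.+1 k).
Proof.
case/lastP: l => [|b s]; first by left.
have ne : rcons b s != [::] by rewrite -size_eq0 size_rcons.
move=> Hd Hf; right.
have r0 := run_gt0' ne; have rk := run_le_size (rcons b s).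
have Ht1 : ~~ ((last 0 (rcons b s) <= run (rcons b s)) && (last 0 (rcons b s) < size (rcons b s))).
  apply/negP => /andP[T1 T2]; move: T1 T2; rewrite last_rcons size_rcons => T1 T2.
  have [_ _ Ho _] := move1 Hd T1 T2.
  move: Hf; rewrite frank_ne // last_rcons size_rcons T1 T2 /= take_rcons_size => Hf.
  by move: Ho; rewrite Hf; case: (odd _).
have Ht2 : ~~ (run (rcons b s) + (run (rcons b s) == size (rcons b s)) < last 0 (rcons b s)).
  apply/negP => T2.
  have [_ _ Ho _] := move2 Hd ne Ht1 T2.
  move: Hf; rewrite frank_ne // (negbTE Ht1) T2 => Hf.
  by move: Ho; rewrite Hf; case: (odd _).
move: Ht1 Ht2; rewrite last_rcons.
set r := run _; set k := size _ => Ht1 Ht2.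
have Hrk : r = k /\ (s = k \/ s = k.+1).
  move: Ht1 Ht2; case: (r == k) /eqP => /=; lia.
case: Hrk => Hrk Hs.
have := @run_full (rcons b s); rewrite last_rcons -/k -/r Hrk => /(_ erefl) ->.
exists k; first by rewrite /k size_rcons.
by case: Hs => ->; [left|right].
Qed.

Lemma size_dseq a k : size (dseq a k) = k.
Proof. by elim: k => //= k ->. Qed.

Lemma last_dseq a k : 0 < k -> last 0 (dseq a k) = a.
Proof.
elim: k => // [[|k]] IH _; first by rewrite /= addn0.
have -> : dseq a k.+2 = (a + k.+1) :: dseq a k.+1 by [].
rewrite (_ : last 0 ((a + k.+1) :: dseq a k.+1) = last (a + k.+1) (dseq a k.+1)) // (@lastNE _ 0) ?IH // -size_eq0 size_dseq.
Qed.

Lemma run_dseq a k : run (dseq a k) = k.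
Proof.
elim: k => [|[|k] IH] //.
have -> : dseq a k.+2 = (a + k.+1) :: (a + k) :: dseq a k by [].
by rewrite run2 -[(a + k) :: _]/(dseq a k.+1) IH addnS eqxx.
Qed.

Lemma path_dseq a k : path gtn (a + k) (dseq a k).
Proof. by elim: k => //= k IH; rewrite addnS ltnSn IH. Qed.

Lemma sorted_dseq a k : sorted gtn (dseq a k).
Proof. by case: k => //= k; exact: path_dseq. Qed.

Lemma all_dseq a k : 0 < a -> all ispos (dseq a k).
Proof. by move=> a0; elim: k => //= k ->; rewrite andbT /ispos; lia. Qed.

Lemma frank_dseq a k : (a == k) || (a == k.+1) -> frank (dseq a k) = dseq a k.
Proof.
case: k => [|k] H; first by [].
rewrite frank_ne; last by rewrite -size_eq0 size_dseq.
rewrite last_dseq // run_dseq size_dseq.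
have -> : (a <= k.+1) && (a < k.+1) = false by move: H; case/orP => /eqP ->; lia.
have -> : k.+1 + (k.+1 == k.+1) < a = false by rewrite eqxx; move: H; case/orP => /eqP ->; lia.
by [].
Qed.

Lemma sumn_dseq a k : (sumn (dseq a k)).*2 + k = k * (a.*2 + k).
Proof. elim: k => [|k IH] //=; rewrite doubleD; nia. Qed.

Lemma mem_le_sumn (l : seq nat) x : x \in l -> x <= sumn l.
Proof.
elim: l => //= y l IH; rewrite inE => /orP[/eqP -> | /IH]; lia.
Qed.

Lemma max_sorted (l : seq nat) : sorted gtn l -> \max_(x <- l) x = head 0 l.
Proof.
elim: l => [|x l IH] /=; first by rewrite big_nil.
move=> H; rewrite big_cons IH ?(path_sorted H) //.
case: l H {IH} => /= [|y l]; first by rewrite maxn0.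
by case/andP => H _; apply/maxn_idPl; apply: ltnW.
Qed.

Definition lst m (A : {set 'I_m}) : seq nat := rev (sort leq [seq val i | i <- enum A]).
Definition set_of m (l : seq nat) : {set 'I_m} := [set i : 'I_m | val i \in l].

Lemma lst_perm m (A : {set 'I_m}) : perm_eq (lst A) [seq val i | i <- enum A].
Proof. by rewrite /lst perm_rev perm_sort. Qed.

Lemma lst_sorted m (A : {set 'I_m}) : sorted gtn (lst A).
Proof.
rewrite /lst rev_sorted.
have -> : sorted (fun z : nat => gtn^~ z) = sorted ltn by [].
rewrite ltn_sorted_uniq_leq sort_uniq map_inj_uniq ?enum_uniq //=; last exact: val_inj.
exact: (sort_sorted leq_total).
Qed.

Lemma mem_lst m (A : {set 'I_m}) (i : 'I_m) : (val i \in lst A) = (i \in A).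
Proof. by rewrite (perm_mem (lst_perm A)) (mem_map val_inj) mem_enum. Qed.

Lemma lst_lt m (A : {set 'I_m}) x : x \in lst A -> x < m.
Proof. by rewrite (perm_mem (lst_perm A)) => /mapP[i _ ->]; exact: ltn_ord. Qed.

Lemma sumn_lst m (A : {set 'I_m}) : sumn (lst A) = \sum_(i in A) val i.
Proof. by rewrite (perm_sumn (lst_perm A)) sumnE big_map big_enum. Qed.

Lemma max_lst m (A : {set 'I_m}) : \max_(i in A) val i = head 0 (lst A).
Proof.
rewrite -max_sorted ?lst_sorted // (perm_big _ (lst_perm A)) big_map big_enum //.
Qed.

Lemma set_of_lst m (A : {set 'I_m}) : set_of m (lst A) = A.
Proof. by apply/setP => i; rewrite inE mem_lst. Qed.

Lemma lst_set_of m (l : seq nat) : sorted gtn l -> (forall x, x \in l -> x < m) ->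
  lst (set_of m l) = l.
Proof.
move=> Hs Hl; apply: (irr_sorted_eq (leT := gtn)) => //.
- by move=> y x z /= H1 H2; apply: ltn_trans H2 H1.
- by move=> x; rewrite /= ltnn.
- exact: lst_sorted.
move=> x; apply/idP/idP => [Hx | Hx].
  have xm := lst_lt Hx.
  by move: Hx; rewrite -[x]/(val (Ordinal xm)) mem_lst inE.
have xm := Hl x Hx.
by rewrite -[x]/(val (Ordinal xm)) mem_lst inE.
Qed.

Lemma decs_lst n (A : {set 'I_n.+1}) : ord0 \notin A -> decs (lst A).
Proof.
move=> H0; rewrite /decs lst_sorted /=; apply/allP => x Hx.
have xm := lst_lt Hx.
move: Hx; rewrite -[x]/(val (Ordinal xm)) mem_lst => Hi.
rewrite /ispos lt0n; apply/eqP => E.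
move: Hi; rewrite (_ : Ordinal xm = ord0) ?(negbTE H0) //.
by apply: val_inj.
Qed.

Lemma sign_involution (T : finType) (P : pred T) (w : T -> int) (f : T -> T) :
  (forall x, P x -> f x != x -> [/\ P (f x), f (f x) = x & w (f x) = - w x]%R) ->
  (\sum_(x | P x) w x = \sum_(x | P x && (f x == x)) w x)%R.
Proof.
move=> Hf.
pose g x := if P x && (f x != x) then f x else x.
have gK : involutive g.
  move=> x; rewrite {2}/g; case: ifP => [/andP[Px Nx] | Hx]; last by rewrite /g Hx.
  have [Pf ffx _] := Hf x Px Nx.
  by rewrite /g Pf ffx eq_sym Nx.
rewrite (bigID (fun x => f x == x)) /=.
set Z := (\sum_(i | P i && (f i != i)) w i)%R.
suff : (Z = - Z)%R by move=> HZ; rewrite (_ : Z = 0%R) ?GRing.addr0 //; lia.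
rewrite {1}/Z (reindex_inj (inv_inj gK)) /= -sumrN.
apply: eq_big => x.
  rewrite /g; case: ifP => [/andP[Px Nx] | //].
  have [Pf ffx _] := Hf x Px Nx.
  by rewrite Pf ffx eq_sym Nx.
rewrite /g; case: (boolP (P x && (f x != x))) => [/andP[Px Nx] _ | Hx]; first by have [_ _ ->] := Hf x Px Nx.
by rewrite (negbTE Hx).
Qed.

Definition wA n (A : {set 'I_n.+1}) : int := ((-1) ^+ (\max_(i in A) val i))%R.
Definition phi n (A : {set 'I_n.+1}) : {set 'I_n.+1} := set_of n.+1 (frank (lst A)).
Definition Sj n j (A : {set 'I_n.+1}) := (ord0 \notin A) && (\sum_(i in A) val i == j).

Lemma phi_prop n j (A : {set 'I_n.+1}) : j <= n -> Sj j A -> phi A != A ->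
  [/\ Sj j (phi A), phi (phi A) = A & wA (phi A) = (- wA A)%R].
Proof.
move=> jn /andP[H0 /eqP Hs] Hne.
have Hd := decs_lst H0.
have Hfl : frank (lst A) != lst A.
  by apply: contra Hne => /eqP E; rewrite /phi E set_of_lst.
have [Hdm Hsm Hom Hff] := frank_invol Hd Hfl.
have Hb : forall x, x \in frank (lst A) -> x < n.+1.
  by move=> x /mem_le_sumn; rewrite Hsm sumn_lst Hs; lia.
have Hlm : lst (phi A) = frank (lst A).
  by rewrite /phi lst_set_of //; case/andP: Hdm.
split.
- rewrite /Sj -sumn_lst Hlm Hsm sumn_lst Hs eqxx andbT.
  rewrite -mem_lst Hlm; case/andP: Hdm => _ /allP Hp.
  by apply/negP => /Hp.
- by rewrite /phi Hlm Hff set_of_lst.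
rewrite /wA !max_lst Hlm -(signr_odd _ (head 0 (frank _))) -(signr_odd _ (head 0 (lst A))) Hom.
by case: (odd _); rewrite /= ?expr0 ?expr1 ?opprK.
Qed.

Lemma fixed_frank n j (A : {set 'I_n.+1}) : j <= n -> Sj j A -> phi A = A ->
  frank (lst A) = lst A.
Proof.
move=> jn HS Hp; apply/eqP; apply: contraT => Hne.
have /andP[H0 /eqP Hs] := HS.
have Hd := decs_lst H0.
have [Hdm Hsm _ _] := frank_invol Hd Hne.
have Hb : forall x, x \in frank (lst A) -> x < n.+1.
  by move=> x /mem_le_sumn; rewrite Hsm sumn_lst Hs; lia.
have Hlm : lst (phi A) = frank (lst A).
  by rewrite /phi lst_set_of //; case/andP: Hdm.
by move: Hne; rewrite -Hlm Hp eqxx.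
Qed.

Definition shapes N := [::] :: ([seq dseq m.+1 m | m <- iota 1 N] ++ [seq dseq m.+1 m.+1 | m <- iota 0 N.+1]).

Arguments shapes : simpl never.

Lemma shapes_decs N l : l \in shapes N -> decs l && (frank l == l).
Proof.
rewrite inE mem_cat => /orP[/eqP -> //| /orP[] /mapP[m _ ->]];
  rewrite /decs sorted_dseq all_dseq // frank_dseq ?eqxx ?orbT //.
Qed.

Lemma shapes_uniq N : uniq (shapes N).
Proof.
rewrite /shapes cons_uniq mem_cat negb_or cat_uniq.
apply/and3P; split.
- apply/andP; split; apply/negP => /mapP[m]; rewrite mem_iota.
    by case: m => // m _ /(congr1 size); rewrite size_dseq.
  by move=> _ /(congr1 size); rewrite size_dseq.
- rewrite map_inj_in_uniq ?iota_uniq // => x y _ _ /(congr1 size).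
  by rewrite !size_dseq.
apply/andP; split.
  apply/hasPn => l /mapP[m Hm ->]; apply/negP => /mapP[k Hk].
  move/(congr1 (fun s => (size s, last 0 s))); rewrite !size_dseq !last_dseq //.
    by case=> <- /eqP; rewrite (ltn_eqF (ltnSn _)).
  by move: Hk; rewrite mem_iota => /andP[].
rewrite map_inj_in_uniq ?iota_uniq // => x y _ _ /(congr1 size).
by rewrite !size_dseq => -[].
Qed.

Lemma sumn_dseq_ge a k : k <= a -> k <= sumn (dseq a k).
Proof. move=> ka; have := sumn_dseq a k; nia. Qed.

Lemma Sfix_mem n j N (A : {set 'I_n.+1}) : j <= n -> n <= N ->
  (Sj j A && (phi A == A)) = (A \in [seq set_of n.+1 l | l <- shapes N & sumn l == j]).
Proof.
move=> jn nN; apply/idP/idP.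
- case/andP => HS /eqP Hp.
  have Hf := fixed_frank jn HS Hp.
  case/andP: HS => H0 /eqP Hs.
  have Hd := decs_lst H0.
  apply/mapP; exists (lst A); last by rewrite set_of_lst.
  rewrite mem_filter sumn_lst Hs eqxx /=.
  have [E|[k k0 Ek]] := frank_fix Hd Hf; first by rewrite E inE eqxx.
  have kj : k <= j.
    rewrite -Hs -sumn_lst; case: Ek => ->; apply: sumn_dseq_ge; lia.
  rewrite inE mem_cat; apply/orP; right; apply/orP.
  case: Ek => ->; [right | left]; apply/mapP.
    by exists k.-1; rewrite ?mem_iota ?prednK //; lia.
  by exists k; rewrite ?mem_iota //; lia.
case/mapP => l; rewrite mem_filter => /andP[/eqP Hs Hl] ->.
have /andP[Hd /eqP Hf] := shapes_decs Hl.
have Hb : forall x, x \in l -> x < n.+1 by move=> x /mem_le_sumn; lia.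
have Hlst : lst (set_of n.+1 l) = l by rewrite lst_set_of //; case/andP: Hd.
rewrite /Sj /phi Hlst Hf eqxx andbT -sumn_lst Hlst Hs eqxx andbT.
rewrite -mem_lst Hlst; case/andP: Hd => _ /allP Hp.
by apply/negP => /Hp.
Qed.

Lemma fine_sets n j N : j <= n -> n <= N ->
  (\sum_(A : {set 'I_n.+1} | Sj j A) wA A =
   \sum_(l <- shapes N | sumn l == j) (-1) ^+ (head 0 l) :> int)%R.
Proof.
move=> jn nN.
rewrite (@sign_involution _ _ _ (@phi n)) => [| A HS Hne]; last exact: phi_prop.
rewrite (eq_bigl (fun A => A \in [seq set_of n.+1 l | l <- shapes N & sumn l == j]));
  last by move=> A; rewrite (Sfix_mem _ jn nN).
rewrite -big_uniq.
  rewrite big_map big_filter big_seq_cond [RHS]big_seq_cond.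
  apply: eq_bigr => l /andP[Hl /eqP Hs].
  have /andP[/andP[Hd _] _] := shapes_decs Hl.
  rewrite /wA max_lst lst_set_of // => x /mem_le_sumn; lia.
have Hinj : {in [seq l <- shapes N | sumn l == j] &, injective (set_of n.+1)}.
  move=> l1 l2; rewrite !mem_filter => /andP[/eqP H1 L1] /andP[/eqP H2 L2] /(congr1 (@lst _)).
  have /andP[/andP[D1 _] _] := shapes_decs L1.
  have /andP[/andP[D2 _] _] := shapes_decs L2.
  rewrite !lst_set_of // => x /mem_le_sumn; lia.
by rewrite map_inj_in_uniq // filter_uniq // shapes_uniq.
Qed.


Local Open Scope ring_scope.

Definition s2 m := sumn (dseq m.+1 m).
Definition s1 m := sumn (dseq m.+1 m.+1).
Definition FineP N : {poly int} :=
  1 + \sum_(1 <= m < N.+1) 'X^(s2 m) - \sum_(0 <= m < N.+1) 'X^(s1 m).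

Lemma shapes_sum N j :
  \sum_(l <- shapes N | sumn l == j) ((-1) ^+ (head 0 l) : int) = (FineP N)`_j.
Proof.
rewrite /shapes big_cons big_cat !big_map /FineP coefB coefD coef1 !coef_sum.
have -> : \sum_(m <- iota 1 N | sumn (dseq m.+1 m) == j) ((-1) ^+ head 0 (dseq m.+1 m) : int)
   = \sum_(1 <= m < N.+1) 'X^(s2 m)`_j.
  rewrite /index_iota subSS subn0 big_mkcond; apply: eq_big_seq => m.
  rewrite mem_iota coefXn eq_sym /s2 => /andP[m1 _].
  case: eqP => _ //=.
  case: m m1 => // m _.
  by rewrite -[head 0 _]/(m.+2 + m)%N -signr_odd !addSn !oddS negbK oddD addbb expr0.
have -> : \sum_(m <- iota 0 N.+1 | sumn (dseq m.+1 m.+1) == j) ((-1) ^+ head 0 (dseq m.+1 m.+1) : int)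
   = - \sum_(0 <= m < N.+1) 'X^(s1 m)`_j.
  rewrite /index_iota subn0 -sumrN big_mkcond; apply: eq_bigr => m _.
  rewrite coefXn eq_sym /s1.
  case: eqP => _ /=; last by rewrite oppr0.
  by rewrite -signr_odd addSn oddS oddD addbb expr1.
have -> : sumn [::] = 0%N by [].
rewrite eq_sym; case: eqP => _ /=; rewrite ?expr0 ?add0r ?addrA //.

Qed.

Lemma s2E m : sumn (dseq m.+1 m) = ((m * (3 * m + 1)) %/ 2)%N.
Proof.
have H := sumn_dseq m.+1 m.
have E : (m * (3 * m + 1) = (sumn (dseq m.+1 m)) * 2)%N by move: H; rewrite -!muln2; nia.
by rewrite E mulnK.
Qed.

Lemma s1E m : sumn (dseq m.+1 m.+1) = (sumn (dseq m.+1 m) + (2 * m + 1))%N.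
Proof. by rewrite [dseq _ _]/= [sumn _]/=; lia. Qed.

Definition Bp N : {poly int} :=
  \sum_(1 <= m < N.+1) 'X^((m * (3 * m + 1)) %/ 2) * (1 - 'X^(2 * m + 1)).

Lemma FineP_B N : FineP N + 'X *+ 2 = 1 + 'X + Bp N.
Proof.
rewrite /FineP /Bp (@big_ltn _ _ _ 0 N.+1) // (_ : s1 0 = 1%N) //.
have -> : \sum_(1 <= m < N.+1) 'X^((m * (3 * m + 1)) %/ 2) * (1 - 'X^(2 * m + 1))
    = \sum_(1 <= m < N.+1) ('X^(s2 m) : {poly int}) - \sum_(1 <= m < N.+1) 'X^(s1 m).
  rewrite -sumrB; apply: eq_bigr => m _.
  by rewrite /s1 /s2 s1E s2E mulrBr mulr1 -exprD.
rewrite expr1.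
ring.
Qed.

Local Open Scope ring_scope.

Definition eqm (k : nat) (p q : {poly int}) := forall i, (i <= k)%N -> p`_i = q`_i.

Lemma eqm_refl k p : eqm k p p. Proof. by []. Qed.
Lemma eqm_sym k p q : eqm k p q -> eqm k q p. Proof. by move=> H i /H ->. Qed.
Lemma eqm_trans k p q r : eqm k p q -> eqm k q r -> eqm k p r.
Proof. by move=> H1 H2 i Hi; rewrite H1 // H2. Qed.
Lemma eqmD k p q p' q' : eqm k p p' -> eqm k q q' -> eqm k (p + q) (p' + q').
Proof. by move=> H1 H2 i Hi; rewrite !coefD H1 // H2. Qed.
Lemma eqmB k p q p' q' : eqm k p p' -> eqm k q q' -> eqm k (p - q) (p' - q').
Proof. by move=> H1 H2 i Hi; rewrite !coefB H1 // H2. Qed.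
Lemma eqmM k p q p' q' : eqm k p p' -> eqm k q q' -> eqm k (p * q) (p' * q').
Proof.
move=> H1 H2 i Hi; rewrite !coefM; apply: eq_bigr => j _.
have := ltn_ord j => Hj.
by rewrite H1 ?H2 //; lia.
Qed.
Lemma eqm_eq k p q : p = q -> eqm k p q. Proof. by move=> ->. Qed.

Lemma eqm_prod1 k (r : seq nat) (P : pred nat) (F : nat -> {poly int}) :
  (forall i, P i -> eqm k (F i) 1) -> eqm k (\prod_(i <- r | P i) F i) 1.
Proof.
move=> H; elim/big_ind: _ => //.
by move=> x y Hx Hy; rewrite -(mulr1 1); apply: eqmM.
Qed.

Lemma eqm_1X k e : (k < e)%N -> eqm k (1 - 'X^e) 1.
Proof.
move=> ke i Hi; rewrite coefB coefXn.
have -> : (i == e) = false by apply/eqP; lia.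
by rewrite subr0.
Qed.

Definition altS N : {poly int} := \sum_(k < N.+1) (-1) ^+ k *: 'X^k.

Lemma alt_mul N : (1 + 'X) * altS N = 1 + (-1) ^+ N *: 'X^(N.+1).
Proof.
elim: N => [|N IH].
  by rewrite /altS big_ord1 /= !expr0 scale1r expr1 mulr1 scale1r.
rewrite /altS big_ord_recr /= -/(altS N) mulrDr IH.
have -> : (-1) ^+ N.+1 *: ('X^(N.+1) : {poly int}) = - ((-1) ^+ N *: 'X^(N.+1)).
  by rewrite exprS mulN1r scaleNr.
have -> : (-1) ^+ N.+1 *: ('X^(N.+2) : {poly int}) = - ((-1) ^+ N *: 'X^(N.+1)) * 'X.
  by rewrite exprS mulN1r scaleNr mulNr -scalerAl -exprSr.
ring.
Qed.

Lemma eqm_alt n N : (n <= N)%N -> eqm n ((1 + 'X) * altS N) 1.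
Proof.
move=> nN i Hi; rewrite alt_mul coefD coefZ coefXn.
have -> : (i == N.+1) = false by apply/eqP; lia.
by rewrite mulr0 addr0.
Qed.

Local Open Scope ring_scope.

Definition one k : 'I_k.+2 := @Ordinal k.+2 1 isT.

Lemma exists_one k (A : {set 'I_k.+2}) :
  [exists i in A, (i : nat) == 1%N] = (one k \in A).
Proof.
apply/existsP/idP => [[i /andP[iA /eqP i1]] | H]; last by exists (one k); rewrite H.
by rewrite (_ : one k = i) //; apply: val_inj.
Qed.

Lemma odd_abs_sub2 m : odd `|(m%:Z - 2)%R|%N = odd m.
Proof.
case: m => [|[|m]] //.
by rewrite -addn2 PoszD addrK absz_nat addn2 /= negbK.
Qed.

Definition sgA k (A : {set 'I_k.+2}) : int := if crank_even (dcrank A) then 1 else -1.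

Lemma sg_eq k (A : {set 'I_k.+2}) :
  sgA A = if one k \in A then (-1) ^+ #|A| else wA A.
Proof.
rewrite /sgA /dcrank exists_one /crank_even /wA.
case: (one k \in A); first by rewrite odd_abs_sub2 -signr_odd; case: (odd _).
by rewrite absz_nat -signr_odd; case: (odd _).
Qed.

Lemma lhs_sum k : lhs_coef k.+1 = \sum_(A : {set 'I_k.+2} | distinct_partition A) sgA A.
Proof.
rewrite /lhs_coef /= /Me /Mo (bigID (fun A => crank_even (dcrank A))) /=.
rewrite (eq_bigr (fun _ => 1)) => [|A /andP[_ E]]; last by rewrite /sgA E.
rewrite [X in _ = _ + X](eq_bigr (fun _ => -1)) => [|A /andP[_ /negbTE E]]; last by rewrite /sgA E.
rewrite (eq_bigl (fun A => A \in [set A : {set 'I_k.+2} | distinct_partition A && crank_even (dcrank A)]));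
  last by move=> A; rewrite inE.
rewrite [X in _ = _ + X](eq_bigl (fun A => A \in [set A : {set 'I_k.+2} | distinct_partition A && ~~ crank_even (dcrank A)]));
  last by move=> A; rewrite inE.
by rewrite !sumr_const mulNrn -!natz.
Qed.

Definition Fi k (i : 'I_k.+2) : {poly int} := if val i == 0%N then 0 else - 'X^(val i).
Definition Gi k (i : 'I_k.+2) : {poly int} := if val i == 1%N then 0 else 1.

Lemma W1_term k (J : {set 'I_k.+2}) :
  \prod_i (if i \in J then Fi i else Gi i) =
  if (ord0 \notin J) && (one k \in J) then (-1) ^+ #|J| * 'X^(\sum_(i in J) val i) else 0.
Proof.
case: (boolP (ord0 \in J)) => H0 /=.
  by rewrite (bigD1 ord0) //= H0 /Fi /= mul0r.
case: (boolP (one k \in J)) => H1 /=; last first.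
  by rewrite (bigD1 (one k)) //= (negbTE H1) /Gi /= mul0r.
rewrite (eq_bigr (fun i => if i \in J then - 'X^(val i) else 1)); last first.
  move=> i _; case: ifP => Hi.
    rewrite /Fi; case: eqP => // E.
    by move: H0; rewrite (_ : ord0 = i) ?Hi //; apply: val_inj.
  rewrite /Gi; case: eqP => // E.
  by move: H1; rewrite (_ : one k = i) ?Hi //; apply: val_inj.
by rewrite -big_mkcond /= prodrN prodrXr.
Qed.

Lemma W1_prod k : \prod_(i : 'I_k.+2) (Fi i + Gi i) = - 'X * \prod_(j < k) (1 - 'X^(j + 2)).
Proof.
rewrite big_ord_recl big_ord_recl /Fi /Gi /= add0r mul1r addr0 /bump /= expr1.
congr (_ * _); apply: eq_bigr => i _.
by rewrite addrC !add1n addn2.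
Qed.

Lemma coef_sign m (p : {poly int}) i : ((-1) ^+ m * p)`_i = (-1) ^+ m * p`_i.
Proof.
rewrite -(signr_odd {poly int} m) -(signr_odd int m).
by case: (odd m); rewrite ?expr0 ?mul1r ?expr1 ?mulN1r ?coefN.
Qed.

Lemma W1_coef k : (- 'X * \prod_(j < k) (1 - 'X^(j + 2)) : {poly int})`_k.+1 =
  \sum_(A : {set 'I_k.+2} | distinct_partition A && (one k \in A)) (-1) ^+ #|A|.
Proof.
rewrite -W1_prod bigA_distr coef_sum big_mkcond /=.
rewrite [RHS]big_mkcond; apply: eq_bigr => J _; rewrite W1_term /distinct_partition.
case: (one k \in J) => /=; rewrite ?coef0 ?andbF ?andbT //.
case: (ord0 \in J) => /=; rewrite ?coef0 //.
rewrite coef_sign coefXn eq_sym.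
by case: eqP; rewrite ?mulr1 ?mulr0.
by rewrite coef0.
Qed.

Definition Fpoly k : {poly int} :=
  \sum_(A : {set 'I_k.+2} | ord0 \notin A) wA A *: 'X^(\sum_(i in A) val i).
Definition W0 k : {poly int} :=
  \sum_(A : {set 'I_k.+2} | (ord0 \notin A) && (one k \notin A)) wA A *: 'X^(\sum_(i in A) val i).

Lemma Fpoly_coef k j : (Fpoly k)`_j = \sum_(A : {set 'I_k.+2} | Sj j A) wA A.
Proof.
rewrite /Fpoly coef_sum /Sj big_mkcondr /=; apply: eq_bigr => A _.
by rewrite coefZ coefXn eq_sym; case: eqP; rewrite ?mulr1 ?mulr0.
Qed.

Lemma W0_coef k : (W0 k)`_k.+1 = \sum_(A : {set 'I_k.+2} | distinct_partition A && (one k \notin A)) wA A.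
Proof.
rewrite /W0 coef_sum /distinct_partition [RHS]big_mkcond [LHS]big_mkcond /=.
apply: eq_bigr => A _.
case: (ord0 \in A) => //=; rewrite ?coef0 //.
case: (one k \in A) => //=; rewrite ?coef0 ?andbF ?andbT //.
by rewrite coefZ coefXn eq_sym; case: eqP; rewrite ?mulr1 ?mulr0.
Qed.

Lemma max_ge2 k (B : {set 'I_k.+2}) : ord0 \notin B -> one k \notin B -> B != set0 ->
  (2 <= \max_(i in B) val i)%N.
Proof.
move=> H0 H1 /set0Pn[i iB].
have H := @leq_bigmax_cond _ (fun j => j \in B) (fun i : 'I_k.+2 => val i) i iB.
apply: leq_trans H.
case: i iB => [[|[|i]] Hi] iB //.
  by move: H0; rewrite (_ : ord0 = Ordinal Hi) ?iB //; apply: val_inj.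
by move: H1; rewrite (_ : one k = Ordinal Hi) ?iB //; apply: val_inj.
Qed.

Lemma F_W0 k : Fpoly k = (1 + 'X) * W0 k - 'X *+ 2.
Proof.
rewrite /Fpoly (bigID (fun A : {set 'I_k.+2} => one k \in A)) /= -/(W0 k).
rewrite (reindex_onto (fun B => one k |: B) (fun A => A :\ one k)) /=; last first.
  by move=> A /andP[_ H]; rewrite setD1K.
rewrite (eq_bigl (fun B : {set 'I_k.+2} => (ord0 \notin B) && (one k \notin B))); last first.
  move=> B; rewrite !in_setU1 eqxx /= andbT.
  case: (boolP (one k \in B)) => H1 /=.
    rewrite andbF; apply/negbTE/negP => /andP[_ /eqP E].
    by move: H1; rewrite -E !inE eqxx.
  by rewrite setU1K // eqxx andbT.
rewrite (eq_bigr (fun B => 'X * (wA B *: 'X^(\sum_(i in B) val i)) - (if B == set0 then 'X *+ 2 else 0)));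
  last first.
  move=> B /andP[H0 H1].
  rewrite /wA big_setU1 //= big_setU1 //= exprS.
  case: eqP => [-> | /eqP Bn].
    by rewrite !big_set0 /= expr0 scale1r mulr1 expr1 scaleN1r; ring.
  rewrite subr0 scalerAr; congr (_ * (_ ^+ _ *: _)).
  by apply/maxn_idPr; apply: leq_trans (max_ge2 H0 H1 Bn).
rewrite sumrB -mulr_sumr -/(W0 k) -big_mkcondr /=.
rewrite (eq_bigl (pred1 set0)); last first.
  move=> B /=; case: eqP => [-> | _]; rewrite ?andbF //.
  by rewrite !inE.
rewrite big_pred1_eq.
ring.
Qed.

Lemma W0_eqm k N : (k.+1 <= N)%N -> eqm k.+1 (W0 k) (1 + altS N * Bp N).
Proof.
move=> kN.
have HF : eqm k.+1 (Fpoly k) (FineP N).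
  by move=> j Hj; rewrite Fpoly_coef (@fine_sets k.+1 j N) // shapes_sum.
have H1 : eqm k.+1 ((1 + 'X) * W0 k) (1 + 'X + Bp N).
  have -> : (1 + 'X) * W0 k = Fpoly k + 'X *+ 2 by rewrite F_W0 subrK.
  rewrite -FineP_B; exact: eqmD.
have H2 := eqmM (@eqm_refl k.+1 (altS N)) H1.
have H3 : eqm k.+1 ((1 + 'X) * altS N * W0 k) (W0 k).
  rewrite -[X in eqm _ _ X]mul1r; apply: eqmM; last exact: eqm_refl.
  by apply: eqm_alt; lia.
apply: eqm_trans (eqm_sym H3) _.
have -> : (1 + 'X) * altS N * W0 k = altS N * ((1 + 'X) * W0 k) by ring.
apply: eqm_trans H2 _.
rewrite mulrDr mulrC; apply: eqmD (@eqm_refl _ _).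
by apply: eqm_alt; lia.
Qed.

Lemma prod_eqm k N : (k.+1 <= N)%N ->
  ('X * \prod_(j < N.+1) (1 - 'X^(j + 2)) : {poly int})`_k.+1 =
  ('X * \prod_(j < k) (1 - 'X^(j + 2)))`_k.+1.
Proof.
move=> kN.
rewrite -(big_mkord xpredT (fun j => 1 - 'X^(j + 2))) (@big_cat_nat _ _ _ k) //=; last by lia.
rewrite big_mkord.
have HR : eqm k.+1 (\prod_(k <= j < N.+1) (1 - 'X^(j + 2))) 1.
  rewrite big_nat_cond; apply: eqm_prod1 => i /andP[/andP[ki _] _].
  by apply: eqm_1X; lia.
have := eqmM (@eqm_refl k.+1 ('X * \prod_(j < k) (1 - 'X^(j + 2)))) HR.
by rewrite mulr1 -mulrA; apply.
Qed.

Theorem main : forall N n : nat, (n <= N)%N -> lhs_coef n = ((rhs_trunc N)`_n)%R.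
Proof.
move=> N [|k] nN.
  rewrite /lhs_coef /= /rhs_trunc coefB coefXM /= subr0 coefM big_ord1.
  have -> : (Bp N)`_0 = 0.
    rewrite /Bp coef_sum big_nat big1 // => m /andP[m1 _].
    rewrite coefXnM ifT //; rewrite divn_gt0 //; nia.
  by rewrite mulr0.
rewrite lhs_sum (bigID (fun A : {set 'I_k.+2} => one k \in A)) /=.
rewrite (eq_bigr (fun A : {set 'I_k.+2} => (-1) ^+ #|A|)); last by move=> A /andP[_ H]; rewrite sg_eq H.
rewrite [X in _ + X = _](eq_bigr (fun A : {set 'I_k.+2} => wA A)); last first.
  by move=> A /andP[_ H]; rewrite sg_eq (negbTE H).
rewrite -W1_coef -W0_coef (W0_eqm nN) //.
rewrite /rhs_trunc -/(altS N) -/(Bp N) coefB prod_eqm // mulNr coefN coefD coef1 /=.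
by rewrite add0r addrC.
Qed.


Theorem theorem5p1 :
  forall N n : nat, (n <= N)%N -> lhs_coef n = ((rhs_trunc N)`_n)%R.
Proof. exact: main. Qed.
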